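(* Let $X=\{0,1\}^{\mathbb{Z}}$. Then the topological full group $\llbracket X\rrbracket$ is a subgroup of the Brin–Thompson group $2V$.
   Context: For a subshift $X\subseteq\Sigma^{\mathbb{Z}}$ with shift map $\sigma(x)_i=x_{i+1}$, the topological full group $\llbracket X\rrbracket$ is the group of all homeomorphisms $f:X\to X$ for which there is a continuous function $c:X\to\mathbb{Z}$ (the cocycle of $f$) with $f(x)=\sigma^{c(x)}(x)$ for all $x\in X$. Configurations of $\{0,1\}^{\mathbb{Z}}$ are written $x.y$ with $x\in\{0,1\}^{(-\infty,-1]}$, $y\in\{0,1\}^{\mathbb{N}}$, the coordinate right after the point being coordinate $0$. The Brin–Thompson group $2V$ is (here) the group of all homeomorphisms $f:\{0,1\}^{\mathbb{Z}}\to\{0,1\}^{\mathbb{Z}}$ for which there exist $n\in\mathbb{N}$ and a map assigning to each pair $(u,v)$ with $u\in\{0,1\}^n$, $v\in\{0,1\}^{n+1}$ a pair of finite words $(u',v')$, such that $f(xu.vy)=xu'.v'y$ for all left-infinite $x$ and right-infinite $y$. *)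

(* Defs.v *)
From Stdlib Require Import ZArith List Arith.
Import ListNotations.
Open Scope Z_scope.

Definition config := Z -> bool.

Definition agree (N : nat) (x y : config) : Prop :=
  forall i : Z, - Z.of_nat N <= i <= Z.of_nat N -> x i = y i.

(* Continuity for the product (Cantor) topology on {0,1}^Z, whose basis is
   the cylinder sets: every coordinate window of f y is determined by a
   coordinate window of y near x. *)
Definition continuous_map (f : config -> config) : Prop :=
  forall (x : config) (M : nat), exists N : nat,
    forall y : config, agree N x y -> agree M (f x) (f y).

(* Continuity of a map into the discrete space Z (= local constancy). *)
Definition continuous_cocycle (c : config -> Z) : Prop :=
  forall x : config, exists N : nat,
    forall y : config, agree N x y -> c y = c x.

Definition homeomorphism (f : config -> config) : Prop :=
  continuous_map f /\
  exists g : config -> config,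
    continuous_map g /\ (forall x, g (f x) = x) /\ (forall x, f (g x) = x).

Definition shift_pow (k : Z) (x : config) : config := fun i => x (i + k).

Definition in_TFG (f : config -> config) : Prop :=
  homeomorphism f /\
  exists c : config -> Z, continuous_cocycle c /\
    forall x, f x = shift_pow (c x) x.

(* A left-infinite word x in {0,1}^{(-oo,-1]} is represented by
   L : nat -> bool with L k = x_{-(k+1)}; a right-infinite word y in
   {0,1}^N by R : nat -> bool with R k = y_k. *)
Definition glue (L R : nat -> bool) : config :=
  fun i => if i <? 0 then L (Z.to_nat (- i - 1)) else R (Z.to_nat i).

(* Left-infinite word x followed by the finite word u (last letter of u at
   coordinate -1). *)
Definition lcat (L : nat -> bool) (u : list bool) : nat -> bool :=
  fun k => if (k <? length u)%nat then nth (length u - 1 - k)%nat u false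
           else L (k - length u)%nat.

(* Finite word v followed by the right-infinite word y (first letter of v at
   coordinate 0). *)
Definition rcat (v : list bool) (R : nat -> bool) : nat -> bool :=
  fun k => if (k <? length v)%nat then nth k v false else R (k - length v)%nat.

Definition in_2V (f : config -> config) : Prop :=
  homeomorphism f /\
  exists (n : nat) (tr : list bool -> list bool -> list bool * list bool),
    forall u v : list bool, length u = n -> length v = S n ->
      forall (L R : nat -> bool),
        f (glue (lcat L u) (rcat v R)) =
        glue (lcat L (fst (tr u v))) (rcat (snd (tr u v)) R).

(* Main.v *)
Require Import Defs.
From Stdlib Require Import ZArith List Arith Lia Classical FunctionalExtensionality IndefiniteDescription.
Import ListNotations.
Open Scope Z_scope.

Definition ag (k : nat) (z x : config) : Prop :=
  forall i, - Z.of_nat k < i < Z.of_nat k -> z i = x i.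
Definition bad (c : config -> Z) (k : nat) (z : config) : Prop :=
  forall N : nat, exists x y, ag k z x /\ ag k z y /\ agree N x y /\ c x <> c y.
Definition upd (z : config) (k : nat) (a b : bool) : config :=
  fun i => if Z.eq_dec i (Z.of_nat k) then b
           else if Z.eq_dec i (- Z.of_nat k) then a else z i.

Lemma agree_mono M N x y : (M <= N)%nat -> agree N x y -> agree M x y.
Proof. intros H A i Hi. apply A. lia. Qed.

Lemma bad_step c k z : bad c k z -> exists z', ag k z z' /\ bad c (S k) z'.
Proof.
  intros Hb. apply NNPP; intro Hn.
  assert (G : forall a b, exists M, forall x y, ag (S k) (upd z k a b) x ->
     ag (S k) (upd z k a b) y -> agree M x y -> c x = c y).
  { intros a b. apply NNPP; intro H. apply Hn. exists (upd z k a b). split.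
    - intros i Hi. unfold upd.
      destruct (Z.eq_dec i (Z.of_nat k)); [lia|].
      destruct (Z.eq_dec i (- Z.of_nat k)); [lia|]. reflexivity.
    - intro M. apply NNPP; intro H2. apply H. exists M. intros x y Hx Hy Hxy.
      apply NNPP; intro H3. apply H2. exists x, y. auto. }
  destruct (G false false) as [M1 H1]. destruct (G false true) as [M2 H2].
  destruct (G true false) as [M3 H3]. destruct (G true true) as [M4 H4].
  destruct (Hb (Nat.max k (Nat.max M1 (Nat.max M2 (Nat.max M3 M4)))))
    as (x & y & Hx & Hy & Hxy & Hc).
  apply Hc.
  assert (Hz : ag (S k) (upd z k (x (- Z.of_nat k)) (x (Z.of_nat k))) x).
  { intros i Hi. unfold upd.
    destruct (Z.eq_dec i (Z.of_nat k)); [subst; auto|].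
    destruct (Z.eq_dec i (- Z.of_nat k)); [subst; auto|]. apply Hx; lia. }
  assert (Hz' : ag (S k) (upd z k (x (- Z.of_nat k)) (x (Z.of_nat k))) y).
  { intros i Hi. unfold upd.
    destruct (Z.eq_dec i (Z.of_nat k)); [subst; apply Hxy; lia|].
    destruct (Z.eq_dec i (- Z.of_nat k)); [subst; apply Hxy; lia|]. apply Hy; lia. }
  destruct (x (- Z.of_nat k)), (x (Z.of_nat k)).
  - apply (H4 x y Hz Hz'). eapply agree_mono; [|exact Hxy]. lia.
  - apply (H3 x y Hz Hz'). eapply agree_mono; [|exact Hxy]. lia.
  - apply (H2 x y Hz Hz'). eapply agree_mono; [|exact Hxy]. lia.
  - apply (H1 x y Hz Hz'). eapply agree_mono; [|exact Hxy]. lia.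
Qed.

Fixpoint iter_seq (next : nat -> config -> config) (z0 : config) (k : nat) : config :=
  match k with O => z0 | S k => next k (iter_seq next z0 k) end.

Lemma uniform c : continuous_cocycle c ->
  exists N, forall x y, agree N x y -> c x = c y.
Proof.
  intro Hc. apply NNPP; intro Hn.
  assert (B0 : forall z, bad c 0 z).
  { intros z N. apply NNPP; intro H. apply Hn. exists N. intros x y Hxy.
    apply NNPP; intro H'. apply H. exists x, y.
    repeat split; try (intros i Hi; lia); auto. }
  assert (Hstep : forall k z, exists z', bad c k z -> ag k z z' /\ bad c (S k) z').
  { intros k z. destruct (classic (bad c k z)) as [H|H].
    - destruct (bad_step _ _ _ H) as [z' Hz']. exists z'; auto.
    - exists z; tauto. }
  pose (next := fun k z => proj1_sig (constructive_indefinite_description _ (Hstep k z))).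
  assert (Hnext : forall k z, bad c k z -> ag k z (next k z) /\ bad c (S k) (next k z)).
  { intros k z. exact (proj2_sig (constructive_indefinite_description _ (Hstep k z))). }
  pose (s := iter_seq next (fun _ => false)).
  assert (Hbad : forall k, bad c k (s k)).
  { induction k; [apply B0|]. simpl. apply Hnext. exact IHk. }
  assert (Hag : forall k m, ag k (s k) (s (k + m)%nat)).
  { intros k m. induction m.
    - rewrite Nat.add_0_r. intros i _. reflexivity.
    - rewrite Nat.add_succ_r. intros i Hi. rewrite (IHm i Hi).
      simpl. apply (proj1 (Hnext _ _ (Hbad _))). lia. }
  pose (zl := fun i => s (S (Z.to_nat (Z.abs i))) i).
  assert (Hz : forall k, ag k (s k) zl).
  { intros k i Hi. unfold zl.
    pose proof (Hag (S (Z.to_nat (Z.abs i))) (k - S (Z.to_nat (Z.abs i)))%nat i) as E.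
    replace (S (Z.to_nat (Z.abs i)) + (k - S (Z.to_nat (Z.abs i))))%nat with k in E by lia.
    symmetry. apply E. lia. }
  destruct (Hc zl) as [N0 HN0].
  destruct (Hbad (S N0) 0%nat) as (x & y & Hx & Hy & _ & Hne).
  apply Hne.
  assert (Ax : agree N0 zl x).
  { intros i Hi. rewrite <- (Hz (S N0) i) by lia. apply Hx. lia. }
  assert (Ay : agree N0 zl y).
  { intros i Hi. rewrite <- (Hz (S N0) i) by lia. apply Hy. lia. }
  rewrite (HN0 x Ax), (HN0 y Ay). reflexivity.
Qed.

Lemma bounded_list : forall (S : list Z) (c : config -> Z),
  (forall x y, (forall i, In i S -> x i = y i) -> c x = c y) ->
  exists K, forall x, Z.abs (c x) <= K.
Proof.
  induction S as [|j S IH]; intros c Hc.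
  - exists (Z.abs (c (fun _ => false))). intro x.
    rewrite (Hc x (fun _ => false)); [lia|]. intros i [].
  - pose (setb := fun (b : bool) (x : config) => fun i => if Z.eq_dec i j then b else x i).
    assert (HB : forall b, exists K, forall x, Z.abs (c (setb b x)) <= K).
    { intro b. apply (IH (fun x => c (setb b x))). intros x y Hxy. apply Hc.
      intros i [Hi|Hi]; unfold setb; destruct (Z.eq_dec i j); auto. lia. }
    destruct (HB false) as [K0 H0]. destruct (HB true) as [K1 H1].
    exists (Z.max K0 K1). intro x.
    rewrite (Hc x (setb (x j) x)).
    + destruct (x j); [specialize (H1 x)|specialize (H0 x)]; lia.
    + intros i _. unfold setb. destruct (Z.eq_dec i j); subst; auto.
Qed.

Lemma bounded c N : (forall x y, agree N x y -> c x = c y) ->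
  exists K, forall x, Z.abs (c x) <= K.
Proof.
  intro H. apply (bounded_list (map (fun m => Z.of_nat m - Z.of_nat N) (seq 0 (2 * N + 1)))).
  intros x y Hxy. apply H. intros i Hi. apply Hxy. apply in_map_iff.
  exists (Z.to_nat (i + Z.of_nat N)). split; [lia|]. apply in_seq. lia.
Qed.

Lemma X_neg_in L u v R i : i < 0 -> - i <= Z.of_nat (length u) ->
  glue (lcat L u) (rcat v R) i = nth (Z.to_nat (Z.of_nat (length u) + i)) u false.
Proof.
  intros H1 H2. unfold glue, lcat.
  rewrite (proj2 (Z.ltb_lt _ _) H1).
  rewrite (proj2 (Nat.ltb_lt _ _)) by lia. f_equal. lia.
Qed.

Lemma X_neg_out L u v R i : i < 0 -> - i > Z.of_nat (length u) ->
  glue (lcat L u) (rcat v R) i = L (Z.to_nat (- i - 1 - Z.of_nat (length u))).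
Proof.
  intros H1 H2. unfold glue, lcat.
  rewrite (proj2 (Z.ltb_lt _ _) H1).
  rewrite (proj2 (Nat.ltb_ge _ _)) by lia. f_equal. lia.
Qed.

Lemma X_pos_in L u v R i : 0 <= i -> i < Z.of_nat (length v) ->
  glue (lcat L u) (rcat v R) i = nth (Z.to_nat i) v false.
Proof.
  intros H1 H2. unfold glue, rcat.
  rewrite (proj2 (Z.ltb_ge _ _) H1).
  rewrite (proj2 (Nat.ltb_lt _ _)) by lia. reflexivity.
Qed.

Lemma X_pos_out L u v R i : 0 <= i -> i >= Z.of_nat (length v) ->
  glue (lcat L u) (rcat v R) i = R (Z.to_nat (i - Z.of_nat (length v))).
Proof.
  intros H1 H2. unfold glue, rcat.
  rewrite (proj2 (Z.ltb_ge _ _) H1).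
  rewrite (proj2 (Nat.ltb_ge _ _)) by lia. f_equal. lia.
Qed.

Lemma nth_map_seq (g : nat -> bool) len j : (j < len)%nat ->
  nth j (map g (seq 0 len)) false = g j.
Proof.
  intro H. rewrite nth_indep with (d' := g 0%nat) by (rewrite length_map, length_seq; lia).
  rewrite map_nth, seq_nth by lia. reflexivity.
Qed.

Theorem mainTheorem1 : forall f : config -> config, in_TFG f -> in_2V f.
Proof.
  intros f [Hh [c [Hc Hf]]]. split; [exact Hh|].
  destruct (uniform c Hc) as [N HN]. destruct (bounded c N HN) as [K HK].
  pose (n := Nat.max N (Z.to_nat K)).
  pose (L0 := fun _ : nat => false).
  exists n.
  exists (fun u v =>
    let X0 := glue (lcat L0 u) (rcat v L0) in
    let k := c X0 in
    (map (fun j => X0 (Z.of_nat j - Z.of_nat n)) (seq 0 (Z.to_nat (Z.of_nat n + k))),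
     map (fun j => X0 (Z.of_nat j + k)) (seq 0 (Z.to_nat (Z.of_nat n + 1 - k))))).
  intros u v Hu Hv L R. cbv beta zeta. simpl fst. simpl snd.
  assert (Hagr : forall i, - Z.of_nat n <= i <= Z.of_nat n ->
     glue (lcat L u) (rcat v R) i = glue (lcat L0 u) (rcat v L0) i).
  { intros i Hi. destruct (Z_lt_le_dec i 0).
    - rewrite !X_neg_in by lia. reflexivity.
    - rewrite !X_pos_in by lia. reflexivity. }
  assert (Hk : c (glue (lcat L u) (rcat v R)) = c (glue (lcat L0 u) (rcat v L0))).
  { apply HN. intros i Hi. apply Hagr. lia. }
  assert (Hkb := HK (glue (lcat L0 u) (rcat v L0))).
  assert (HKn : (Z.to_nat K <= n)%nat) by lia.
  remember (c (glue (lcat L0 u) (rcat v L0))) as k eqn:Ek.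
  rewrite Hf, Hk. apply functional_extensionality; intro i. unfold shift_pow.
  destruct (Z_lt_le_dec i 0).
  - destruct (Z_le_gt_dec (- i) (Z.of_nat n + k)).
    + rewrite (X_neg_in L _ (map _ _)) by (rewrite ?length_map, ?length_seq; lia).
      rewrite length_map, length_seq, nth_map_seq by lia.
      rewrite Hagr by lia. f_equal. lia.
    + rewrite (X_neg_out L _ (map _ _)) by (rewrite ?length_map, ?length_seq; lia).
      rewrite X_neg_out by lia. rewrite length_map, length_seq. f_equal. lia.
  - destruct (Z_lt_le_dec i (Z.of_nat n + 1 - k)).
    + rewrite (X_pos_in L _ (map _ _)) by (rewrite ?length_map, ?length_seq; lia).
      rewrite nth_map_seq by lia. rewrite Hagr by lia. f_equal. lia.
    + rewrite (X_pos_out L _ (map _ _)) by (rewrite ?length_map, ?length_seq; lia).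
      rewrite X_pos_out by lia. rewrite length_map, length_seq. f_equal. lia.
Qed.
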